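(* Let $L$ be a finite-dimensional Lie algebra over a field $F$ and let $M$ be a maximal subalgebra of $L$. Then $M$ is a c-ideal of $L$ if and only if $\eta(L:M)=\dim(L/M)$.
   Context: For a subalgebra $B$ of $L$, $B_L$ denotes the core of $B$, the largest ideal of $L$ contained in $B$. A subalgebra $B$ is a c-ideal of $L$ if there is an ideal $C$ of $L$ with $L=B+C$ and $B\cap C\subseteq B_L$. For a nonzero subalgebra $X$, the strict core $k(X)$ is the sum of all ideals of $L$ that are proper subalgebras of $X$ (it is $0$ if there are none). A subalgebra $C$ is a completion of $M$ if $C\not\subseteq M$ but every proper subalgebra of $C$ that is an ideal of $L$ is contained in $M$; an ideal completion is a completion that is an ideal of $L$. The ideal index $\eta(L:M)$ is $\dim(C/k(C))$ for any ideal completion $C$ of $M$ (independent of the choice of $C$). *)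

(* Defs.v *)
From HB Require Import structures.
From mathcomp Require Import all_boot all_order all_algebra.
Set Implicit Arguments. Unset Strict Implicit. Unset Printing Implicit Defensive.
Import GRing.Theory.
Local Open Scope ring_scope.
Local Open Scope vspace_scope.

Section Lie.
Variables (F : fieldType) (L : vectType F) (br : L -> L -> L).

Definition lie_bracket : Prop :=
  [/\ (forall a x y z, (br (a *: x + y) z = a *: br x z + br y z)%R),
      (forall a x y z, (br z (a *: x + y) = a *: br z x + br z y)%R),
      (forall x, br x x = 0%R) &
      (forall x y z, (br x (br y z) + br y (br z x) + br z (br x y) = 0)%R)].

Definition subalgebra (U : {vspace L}) : Prop :=
  forall x y, x \in U -> y \in U -> br x y \in U.

Definition lie_ideal (I : {vspace L}) : Prop :=
  forall x y, y \in I -> br x y \in I.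

Definition maximal_subalgebra (M : {vspace L}) : Prop :=
  [/\ subalgebra M, M != fullv &
      forall U, subalgebra U -> (M <= U)%VS -> U = M \/ U = fullv].

Definition is_core (B K : {vspace L}) : Prop :=
  [/\ lie_ideal K, (K <= B)%VS &
      forall I, lie_ideal I -> (I <= B)%VS -> (I <= K)%VS].

Definition c_ideal (B : {vspace L}) : Prop :=
  exists C, [/\ lie_ideal C, (B + C)%VS = fullv &
     exists K, is_core B K /\ (B :&: C <= K)%VS].

Definition is_sum_of (P : {vspace L} -> Prop) (K : {vspace L}) : Prop :=
  (forall I, P I -> (I <= K)%VS) /\
  (forall K', (forall I, P I -> (I <= K')%VS) -> (K <= K')%VS).

Definition proper_ideal_in (X I : {vspace L}) : Prop :=
  [/\ subalgebra I, lie_ideal I, (I <= X)%VS & I != X].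

Definition is_strict_core (X K : {vspace L}) : Prop :=
  is_sum_of (proper_ideal_in X) K.

Definition completion (M C : {vspace L}) : Prop :=
  [/\ subalgebra C, ~~ (C <= M)%VS &
      forall I, proper_ideal_in C I -> (I <= M)%VS].

Definition ideal_completion (M C : {vspace L}) : Prop :=
  completion M C /\ lie_ideal C.

(* eta(L:M) = n : dim(C / k(C)) = n for (any) ideal completion C of M *)
Definition ideal_index_is (M : {vspace L}) (n : nat) : Prop :=
  forall C K, ideal_completion M C -> is_strict_core C K ->
    (\dim C - \dim K)%N = n.

End Lie.

(* Main.v *)
Require Import Defs.
From mathcomp Require Import all_boot all_order all_algebra.
From mathcomp Require Import zify.
From Stdlib Require Import Classical.
Set Implicit Arguments. Unset Strict Implicit. Unset Printing Implicit Defensive.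
Import GRing.Theory.
Local Open Scope ring_scope.

Lemma brDl (F : fieldType) (L : vectType F) (br : L -> L -> L) :
  lie_bracket br -> forall x y z, br (x + y) z = br x z + br y z.
Proof. by case=> Hl _ _ _ x y z; rewrite -{1}(scale1r x) Hl scale1r. Qed.

Lemma brDr (F : fieldType) (L : vectType F) (br : L -> L -> L) :
  lie_bracket br -> forall x y z, br z (x + y) = br z x + br z y.
Proof. by case=> _ Hr _ _ x y z; rewrite -{1}(scale1r x) Hr scale1r. Qed.

Lemma br0l (F : fieldType) (L : vectType F) (br : L -> L -> L) :
  lie_bracket br -> forall z, br 0 z = 0.
Proof.
move=> Hbr z; have := brDl Hbr 0 0 z; rewrite addr0.
by move=> /(congr1 (fun t => t - br 0 z)); rewrite addrK subrr.
Qed.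

Lemma br0r (F : fieldType) (L : vectType F) (br : L -> L -> L) :
  lie_bracket br -> forall z, br z 0 = 0.
Proof.
move=> Hbr z; have := brDr Hbr 0 0 z; rewrite addr0.
by move=> /(congr1 (fun t => t - br z 0)); rewrite addrK subrr.
Qed.

Lemma br_anti (F : fieldType) (L : vectType F) (br : L -> L -> L) :
  lie_bracket br -> forall x y, br x y = - br y x.
Proof.
move=> Hbr x y; have H := Hbr; case: H => _ _ Halt _.
have := Halt (x + y); rewrite (brDl Hbr) !(brDr Hbr) !Halt add0r addr0.
by move=> /eqP; rewrite addr_eq0 => /eqP.
Qed.

Lemma ideal_subalg (F : fieldType) (L : vectType F) (br : L -> L -> L) I :
  lie_ideal br I -> subalgebra br I.
Proof. by move=> HI x y _ Hy; apply: HI. Qed.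

Lemma ideal_left (F : fieldType) (L : vectType F) (br : L -> L -> L) I :
  lie_bracket br -> lie_ideal br I -> forall x y, x \in I -> br x y \in I.
Proof. by move=> Hbr HI x y Hx; rewrite (br_anti Hbr) memvN; apply: HI. Qed.

Lemma ideal_add (F : fieldType) (L : vectType F) (br : L -> L -> L) I J :
  lie_bracket br -> lie_ideal br I -> lie_ideal br J -> lie_ideal br (I + J)%VS.
Proof.
move=> Hbr HI HJ x y /memv_addP [u Hu [v Hv ->]].
by rewrite (brDr Hbr); apply: memv_add; [apply: HI | apply: HJ].
Qed.

Lemma ideal_cap (F : fieldType) (L : vectType F) (br : L -> L -> L) I J :
  lie_ideal br I -> lie_ideal br J -> lie_ideal br (I :&: J)%VS.
Proof.
move=> HI HJ x y; rewrite !memv_cap => /andP [Hi Hj].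
by rewrite HI ?HJ.
Qed.

Lemma ideal0 (F : fieldType) (L : vectType F) (br : L -> L -> L) :
  lie_bracket br -> lie_ideal br 0%VS.
Proof. by move=> Hbr x y; rewrite memv0 => /eqP ->; rewrite (br0r Hbr) mem0v. Qed.

Lemma subalg_add_ideal (F : fieldType) (L : vectType F) (br : L -> L -> L) M C :
  lie_bracket br -> subalgebra br M -> lie_ideal br C -> subalgebra br (M + C)%VS.
Proof.
move=> Hbr HM HC x y /memv_addP [m1 Hm1 [c1 Hc1 ->]] /memv_addP [m2 Hm2 [c2 Hc2 ->]].
rewrite (brDl Hbr m1) (brDr Hbr _ _ m1) -addrA.
apply: memv_add; first exact: HM.
by apply: memvD; [apply: HC | apply: ideal_left].
Qed.

Lemma exists_max (F : fieldType) (L : vectType F) (P : {vspace L} -> Prop) I0 :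
  (forall I J, P I -> P J -> P (I + J)%VS) -> P I0 ->
  exists K, P K /\ forall J, P J -> (J <= K)%VS.
Proof.
move=> Hadd.
suff H : forall n I, (\dim (fullv : {vspace L}) - \dim I <= n)%N -> P I ->
  exists K, P K /\ forall J, P J -> (J <= K)%VS by apply: (H _ I0 (leqnn _)).
elim=> [|n IH] I Hn HI.
  exists I; split=> // J HJ.
  have Hd : (\dim (fullv : {vspace L}) <= \dim I)%N by lia.
  have : I == fullv by rewrite eqEdim subvf.
  by move=> /eqP ->; apply: subvf.
case: (classic (forall J, P J -> (J <= I)%VS)) => [Hall|Hn2].
  by exists I.
have [J HJ] := not_all_ex_not _ _ Hn2.
have [PJ nJ] := imply_to_and _ _ HJ.
have Hlt : (\dim I < \dim (I + J)%VS)%N.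
  rewrite ltnNge; apply/negP => Hle; apply: nJ.
  have : I == (I + J)%VS by rewrite eqEdim addvSl.
  by move=> /eqP ->; apply: addvSr.
have := dimvS (subvf (I + J)%VS); move=> Hf.
apply: (IH (I + J)%VS); last exact: Hadd.
lia.
Qed.

Lemma exists_completion (F : fieldType) (L : vectType F) (br : L -> L -> L) M :
  forall n I, (\dim I <= n)%N -> lie_ideal br I -> ~~ (I <= M)%VS ->
  exists C, ideal_completion br M C.
Proof.
elim=> [|n IH] I Hn HI HIM.
  move: Hn; rewrite leqn0 dimv_eq0 => /eqP HI0.
  by move: HIM; rewrite HI0 sub0v.
case: (classic (forall J, proper_ideal_in br I J -> (J <= M)%VS)) => [Hall|Hn2].
  by exists I; split=> //; split=> //; apply: ideal_subalg.
have [J HJ] := not_all_ex_not _ _ Hn2.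
have [[Js Ji JI JnI] nJ] := imply_to_and _ _ HJ.
apply: (IH J) => //; last by apply/negP.
have Hlt : (\dim J < \dim I)%N.
  rewrite ltnNge; apply/negP => Hle; move: JnI.
  by rewrite eqEdim JI Hle.
lia.
Qed.

Theorem theorem2p5 (F : fieldType) (L : vectType F) (br : L -> L -> L)
  (Hbr : lie_bracket br) (M : {vspace L}) (HM : maximal_subalgebra br M) :
  c_ideal br M <-> ideal_index_is br M (\dim (fullv : {vspace L}) - \dim M)%N.
Proof.
case: HM => [Msub Mneq Mmax].
have MC : forall C, lie_ideal br C -> ~~ (C <= M)%VS -> (M + C)%VS = fullv.
  move=> C HC nCM.
  case: (Mmax (M + C)%VS (subalg_add_ideal Hbr Msub HC) (addvSl _ _)) => // Heq.
  by move: nCM; rewrite -Heq addvSr.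
have Hdim : forall C, lie_ideal br C -> ~~ (C <= M)%VS ->
    (\dim C - \dim (M :&: C))%N = (\dim (fullv : {vspace L}) - \dim M)%N.
  move=> C HC nCM; have := dimv_sum_cap M C; rewrite MC //; lia.
have Kle : forall C K, ideal_completion br M C -> is_strict_core br C K ->
    (K <= M :&: C)%VS.
  move=> C K [[Cs CnM Cp] Ci] [_ HK2]; apply: HK2 => I HI.
  rewrite subv_cap Cp //; by case: HI.
split.
- move=> [D [HD HMD [K0 [[HK0 K0M K0max] HMDK0]]]].
  move=> C K HCc HK.
  have [[Cs CnM Cp] Ci] := HCc.
  have step1 : (M :&: C <= K0)%VS.
    case: (boolP (C <= D)%VS) => CD.
      apply: subv_trans HMDK0; rewrite subv_cap capvSl.
      exact: subv_trans (capvSr _ _) CD.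
    have CDM : (C :&: D <= M)%VS.
      apply: Cp; split.
      - exact: ideal_subalg (ideal_cap Ci HD).
      - exact: ideal_cap.
      - exact: capvSl.
      - apply/negP => /eqP Heq; move: CD; by rewrite -Heq capvSr.
    have CDK0 : (C :&: D <= K0)%VS.
      by apply: subv_trans HMDK0; rewrite subv_cap CDM capvSr.
    have Iid : lie_ideal br (M :&: C + K0)%VS.
      move=> x y /memv_addP [u Hu [k Hk ->]].
      rewrite (brDr Hbr).
      have : x \in (M + D)%VS by rewrite HMD memvf.
      move=> /memv_addP [m Hm [d Hd ->]].
      move: Hu; rewrite memv_cap => /andP [HuM HuC].
      rewrite (brDl Hbr) -addrA; apply: memv_add.
        by rewrite memv_cap Msub //= Ci.
      apply: memvD; last exact: HK0.
      apply: (subvP CDK0); rewrite memv_cap Ci //=.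
      exact: ideal_left.
    apply: subv_trans (addvSl _ K0) _.
    apply: K0max => //; rewrite subv_add K0M andbT; exact: capvSl.
  have step2 : (M :&: C <= K)%VS.
    apply: (@subv_trans _ _ (C :&: K0)%VS).
      by rewrite subv_cap capvSr step1.
    case: HK => HK1 _; apply: HK1; split.
    - exact: ideal_subalg (ideal_cap Ci HK0).
    - exact: ideal_cap.
    - exact: capvSl.
    - apply/negP => /eqP Heq; move: CnM.
      by rewrite -Heq; move: (subv_trans (capvSr C K0) K0M) => ->.
  have -> : K = (M :&: C)%VS by apply/eqP; rewrite eqEdim Kle //= dimvS.
  exact: Hdim.
- move=> Hidx.
  have nfM : ~~ (fullv <= M)%VS.
    apply/negP => Hf; move: Mneq; by rewrite eqEdim subvf dimvS.
  have [C HCc] := exists_completion (n := \dim (fullv : {vspace L}))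
     (leqnn _) (fun x y _ => memvf (br x y)) nfM.
  have [[Cs CnM Cp] Ci] := HCc.
  have [K [[Ki KMC] Kmax]] := @exists_max F L
    (fun I => lie_ideal br I /\ (I <= M :&: C)%VS) 0
    (fun I J HI HJ => conj (ideal_add Hbr HI.1 HJ.1)
        (eq_ind_r (fun b => is_true b) (introT andP (conj HI.2 HJ.2)) (subv_add I J (M :&: C)%VS)))
    (conj (ideal0 Hbr) (sub0v _)).
  have HK : is_strict_core br C K.
    split.
      move=> I HI; have := HI; case=> Is Ii IC _; apply: Kmax; split=> //.
      by rewrite subv_cap IC (Cp _ HI).
    move=> K' HK'; apply: HK'; split.
    - exact: ideal_subalg.
    - exact: Ki.
    - exact: subv_trans KMC (capvSr _ _).
    - apply/negP => /eqP Heq; move: CnM.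
      by rewrite -Heq (subv_trans KMC (capvSl _ _)).
  have Heq := Hidx C K HCc HK.
  rewrite -(Hdim C Ci CnM) in Heq.
  have HKe : K = (M :&: C)%VS.
    apply/eqP; rewrite eqEdim KMC /=.
    have := dimvS KMC; have := dimvS (capvSr M C); lia.
  have [K0 [[K0i K0M] K0max]] := @exists_max F L
    (fun I => lie_ideal br I /\ (I <= M)%VS) 0
    (fun I J HI HJ => conj (ideal_add Hbr HI.1 HJ.1)
        (eq_ind_r (fun b => is_true b) (introT andP (conj HI.2 HJ.2)) (subv_add I J M)))
    (conj (ideal0 Hbr) (sub0v _)).
  exists C; split=> //; first exact: MC.
  exists K0; split.
    split=> // I Ii IM; exact: K0max.
  rewrite -HKe; apply: K0max; split=> //.
  exact: subv_trans KMC (capvSl _ _).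
Qed.
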